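(* Let $M$ be a randomized mechanism with discrete output distributions and let $D_0,D_1$ be worst-case neighboring inputs for $M$. Write $A=M(D_0)$, $B=M(D_1)$. Let $n\ge1$ and $\varepsilon>0$, and define for distributions $P,Q\in\{A,B\}$: $$\beta_\infty^{P,Q}=\Pr_{o\sim P}\big[\mathcal L_{P/Q}(o)=\infty\big],\qquad \Gamma_\lambda(P\|Q)=\log\sum_{o:\ \Pr[P=o]\neq0,\ \Pr[Q=o]\neq0}\Pr[P=o]\Big(\frac{\Pr[P=o]}{\Pr[Q=o]}\Big)^{\lambda},$$ $$\delta^{MA}_{P,Q}(\varepsilon)=\min_{\lambda>0}\Big(1-\big[1-\beta_\infty^{P,Q}\big]^n+e^{\,n\Gamma_\lambda(P\|Q)-\lambda\varepsilon}\Big).$$ Then the mechanism consisting of $n$ independent invocations of $M$ on the same input is $(\varepsilon,\delta)$-ADP with $\delta=\max\big(\delta^{MA}_{A,B}(\varepsilon),\delta^{MA}_{B,A}(\varepsilon)\big)$.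
   Context: Privacy loss: for output distributions $P,Q$ and output $o$, $\mathcal L_{P/Q}(o)=\infty$ if $\Pr[P=o]\ne0$ and $\Pr[Q=o]=0$; $\mathcal L_{P/Q}(o)=\ln(\Pr[P=o]/\Pr[Q=o])$ if both are nonzero; $-\infty$ otherwise. For neighboring $D,D'$ let $c(o)=\mathcal L_{M(D)/M(D')}(o)$, $\beta_\infty(D,D')=\Pr_{o\sim M(D)}[c(o)=\infty]$ and $\alpha(\lambda;D,D')=\log\mathbb E_{o\sim M(D)}[e^{\lambda c(o)}\mid c(o)\ne\pm\infty]$. Neighboring inputs $D_0,D_1$ are worst-case for $M$ if there is $k\in\{0,1\}$ such that for all $\lambda>0$ and all neighboring $D,D'$: $\alpha(\lambda;D_k,D_{1-k})\ge\alpha(\lambda;D,D')$ and $\beta_\infty(D_k,D_{1-k})\ge\beta_\infty(D,D')$. A mechanism $N$ is $(\varepsilon,\delta)$-ADP if for all output sets $S$ and all neighboring $D,D'$: $\Pr[N(D)\in S]\le e^\varepsilon\Pr[N(D')\in S]+\delta$. *)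

(* Defs.v *)
From HB Require Import structures.
From mathcomp Require Import all_boot all_order all_algebra.
From mathcomp Require Import all_classical all_reals all_analysis.
Set Implicit Arguments. Unset Strict Implicit. Unset Printing Implicit Defensive.
Import Order.TTheory GRing.Theory Num.Theory.
Local Open Scope classical_set_scope.
Local Open Scope ring_scope.

Section DP.
Variables (R : realType) (O : choiceType).

(* A discrete output distribution on O, given by its probability mass
   function: Pr[P = o] = p o. *)
Definition is_pmf (p : O -> R) : Prop :=
  (forall o, 0 <= p o) /\ (\esum_(o in [set: O]) (p o)%:E = 1)%E.

Definition prob (p : O -> R) (S : set O) : \bar R := \esum_(o in S) (p o)%:E.

Definition ploss (P Q : O -> R) (o : O) : \bar R :=
  if P o != 0 then (if Q o != 0 then (ln (P o / Q o))%:E else +oo%E)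
  else -oo%E.

Definition beta_inf (P Q : O -> R) : \bar R :=
  prob P [set o | ploss P Q o = +oo%E].

Definition finite_loss (P Q : O -> R) : set O :=
  [set o | ploss P Q o \is a fin_num].

(* alpha(lambda) = log E_{o~P}[ e^{lambda c(o)} | c(o) <> +-oo ]
   (conditional expectation = E[X 1_E] / Pr[E]; extended-real conventions
    of MathComp-Analysis: x / 0 = x * +oo, log 0 = -oo). *)
Definition alpha (lam : R) (P Q : O -> R) : \bar R :=
  lne ((\esum_(o in finite_loss P Q) ((P o)%:E * expeR (lam%:E * ploss P Q o)))
       / prob P (finite_loss P Q))%E.

Definition Gamma (lam : R) (P Q : O -> R) : \bar R :=
  lne (\esum_(o in [set o | P o != 0 /\ Q o != 0])
         (P o * (P o / Q o) `^ lam)%:E).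

(* delta^MA_{P,Q}(eps) for n-fold composition; the minimum over lambda > 0
   is taken as an infimum in the extended reals. *)
Definition delta_MA (n : nat) (eps : R) (P Q : O -> R) : \bar R :=
  ereal_inf [set ((1 - (1 - fine (beta_inf P Q)) ^+ n)%:E
                  + expeR ((n%:R)%:E * Gamma lam P Q - (lam * eps)%:E))%E
            | lam in [set lam : R | 0 < lam]].

End DP.

Section Mech.
Variables (R : realType) (I : Type) (O : choiceType).

Definition worst_case (nb : I -> I -> Prop) (M : I -> O -> R) (D0 D1 : I) :=
  nb D0 D1 /\
  exists k : bool,
    let Dk := if k then D1 else D0 in
    let Dk' := if k then D0 else D1 in
    forall (lam : R), 0 < lam -> forall D D', nb D D' ->
      (alpha lam (M D) (M D') <= alpha lam (M Dk) (M Dk'))%E /\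
      (beta_inf (M D) (M D') <= beta_inf (M Dk) (M Dk'))%E.

Definition ADP (nb : I -> I -> Prop) (N : I -> O -> R) (eps : R)
  (delta : \bar R) : Prop :=
  forall (S : set O) (D D' : I), nb D D' ->
    (prob (N D) S <= (expR eps)%:E * prob (N D') S + delta)%E.

End Mech.

(* n independent invocations of M on the same input: outputs are
   n-tuples (finite functions 'I_n -> O) with product mass function *)
Definition nfold (R : realType) (I : Type) (O : choiceType) (M : I -> O -> R) (n : nat)
  : I -> {ffun 'I_n -> O} -> R :=
  fun D x => \prod_(i < n) M D (x i).
Arguments nfold {R I O} M n D x.

(* Main.v *)
Require Import Defs.
From HB Require Import structures.
From mathcomp Require Import all_boot all_order all_algebra.
From mathcomp Require Import all_classical all_reals all_analysis finmap.
From mathcomp Require Import lra.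
Import Order.TTheory GRing.Theory Num.Theory.
Local Open Scope classical_set_scope.
Local Open Scope ring_scope.

Module Part1.
Unset Implicit Arguments.

Section Aux.
Variables (R : realType) (O : choiceType).
Implicit Types (P Q : O -> R).

Lemma finite_lossE P Q o : finite_loss P Q o <-> (P o != 0 /\ Q o != 0).
Proof.
rewrite /finite_loss /ploss /=.
by case: (P o != 0); case: (Q o != 0); split => //; case.
Qed.

Lemma inf_lossE P Q o : ploss P Q o = +oo%E <-> (P o != 0 /\ Q o = 0).
Proof.
rewrite /ploss; case: (boolP (P o != 0)) => HP; case: (boolP (Q o != 0)) => HQ.
all: split => //.
- by case=> _ HQ'; move: HQ; rewrite HQ' eqxx.
- by move=> _; split => //; apply/eqP; move: HQ; rewrite negbK.
- by case.
- by case.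
Qed.

Lemma prob_mkcond P (D : set O) :
  prob P D = (\esum_(o in [set: O]) ((if o \in D then P o else 0)%:E))%E.
Proof.
rewrite /prob esum_mkcond; apply: eq_esum => o _.
by case: (o \in D).
Qed.

Lemma esum_ge_fset (f : O -> R) (A : {fset O}) :
  (forall o, 0 <= f o) ->
  ((\sum_(o <- A) f o)%:E <= \esum_(o in [set: O]) (f o)%:E)%E.
Proof.
move=> f0; apply: esum_ge; exists [set` A].
  by split => //; exact: finite_fset.
by rewrite fsbig_finite ?finite_fset // set_fsetK sumEFin.
Qed.

Lemma prob_ge_fset P (D : set O) (A : {fset O}) :
  (forall o, 0 <= P o) ->
  ((\sum_(o <- A) (if o \in D then P o else 0))%:E <= prob P D)%E.
Proof.
move=> P0; rewrite prob_mkcond; apply: esum_ge_fset => o.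
by case: (o \in D).
Qed.

Lemma pmf_split P Q : is_pmf P ->
  exists p b, [/\ prob P (finite_loss P Q) = p%:E, beta_inf P Q = b%:E,
     0 <= p, 0 <= b & p + b = 1].
Proof.
case=> P0 P1.
have Hsum : (prob P (finite_loss P Q) + beta_inf P Q = 1)%E.
  rewrite -P1 (esumID (finite_loss P Q)); last by move=> o _; rewrite lee_fin.
  rewrite (esumID [set o | ploss P Q o = +oo%E] (setT `&` ~` _));
    last by move=> o _; rewrite lee_fin.
  rewrite [X in (_ + (_ + X))%E]esum1; last first.
    move=> o [[_ /= HF] HI]; apply/eqP; rewrite eqe; apply/negPn/negP => HP.
    case: (boolP (Q o != 0)) => HQ.
      by apply: HF; apply/finite_lossE.
    by apply: HI; apply/inf_lossE; split => //; apply/eqP; rewrite -[_ == _]negbK.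
  rewrite adde0 setTI /prob /beta_inf; congr (_ + esum _ _)%E.
  apply/seteqP; split => o /=; last by move=> [[_ HF] HI].
  move=> HI; split => //; split => // HF.
  by move/finite_lossE: HF => [_ HQ]; move/inf_lossE: HI => [_ HQ']; rewrite HQ' eqxx in HQ.
have g1 : (0 <= prob P (finite_loss P Q))%E by apply: esum_ge0 => o _; rewrite lee_fin.
have g2 : (0 <= beta_inf P Q)%E by apply: esum_ge0 => o _; rewrite lee_fin.
move: Hsum g1 g2.
case: (prob P _) => [p| |]; case: (beta_inf P Q) => [b| |] //= H g1 g2.
exists p, b; split => //; move: H; rewrite -EFinD => /eqP; rewrite eqe => /eqP //.
Qed.

End Aux.

Unset Implicit Arguments.
End Part1.
Import Part1.

Module Part2.
Unset Implicit Arguments.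

Section Aux2.
Variables (R : realType) (O : choiceType).
Implicit Types (P Q : O -> R).

Definition sE P Q (lam : R) : \bar R :=
  \esum_(o in finite_loss P Q) (P o * (P o / Q o) `^ lam)%:E.

Lemma Gamma_sE P Q lam : Gamma lam P Q = lne (sE P Q lam).
Proof.
rewrite /Gamma /sE; congr (lne (esum _ _)).
by apply/seteqP; split => o /= /finite_lossE.
Qed.

Lemma alpha_sE P Q lam :
  alpha lam P Q = lne (sE P Q lam / prob P (finite_loss P Q))%E.
Proof.
rewrite /alpha /sE; congr (lne (_ / _))%E; apply: eq_esum => o.
move=> HF; have := HF; move/finite_lossE => [HP HQ].
rewrite /ploss HP HQ /= /powR.
have -> : (P o / Q o == 0) = false by apply/negbTE; rewrite mulf_neq0 // invr_eq0.
by [].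
Qed.

Lemma sE_mkcond P Q lam : sE P Q lam =
  \esum_(o in [set: O]) ((if o \in finite_loss P Q then P o * (P o / Q o) `^ lam else 0)%:E).
Proof.
rewrite /sE esum_mkcond; apply: eq_esum => o _.
by case: (o \in _).
Qed.

End Aux2.

Unset Implicit Arguments.
End Part2.
Import Part2.

Module Part3.
Local Open Scope fset_scope.
Set Implicit Arguments. Unset Strict Implicit.

Section Tup.
Variables (R : realType) (O : choiceType) (n : nat).

Definition cods (Xs : {fset {ffun 'I_n -> O}}) : {fset O} :=
  seq_fset tt (flatten [seq [seq x i | i <- enum 'I_n] | x : {ffun 'I_n -> O} <- Xs]).

Lemma cods_mem (Xs : {fset {ffun 'I_n -> O}}) x i : x \in Xs -> x i \in cods Xs.
Proof.
move=> xX; rewrite /cods seq_fsetE; apply/flatten_mapP; exists x => //.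
by apply: map_f; rewrite mem_enum.
Qed.

Definition liftf (A : {fset O}) (f : {ffun 'I_n -> A}) : {ffun 'I_n -> O} :=
  [ffun i => val (f i)].

Definition tofX (Xs : {fset {ffun 'I_n -> O}}) (x : Xs) : {ffun 'I_n -> cods Xs} :=
  [ffun i => [` @cods_mem Xs (val x) i (fsvalP x)]].

Lemma liftf_tofX (Xs : {fset {ffun 'I_n -> O}}) (x : Xs) : liftf (tofX x) = val x.
Proof. by apply/ffunP => i; rewrite !ffunE. Qed.

Lemma sum_le_full (Xs : {fset {ffun 'I_n -> O}}) (G : {ffun 'I_n -> O} -> R) :
  (forall f : {ffun 'I_n -> cods Xs}, 0 <= G (liftf f)) ->
  \sum_(x <- Xs) G x <= \sum_(f : {ffun 'I_n -> cods Xs}) G (liftf f).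
Proof.
move=> G0.
rewrite (@big_seq_fsetE _ _ _ _ _ xpredT) /=.
have -> : \sum_(x : Xs) G (val x) = \sum_(x : Xs) G (liftf (tofX x)).
  by apply: eq_bigr => x _; rewrite liftf_tofX.
have inj : {in predT &, injective (@tofX Xs)}.
  move=> x y _ _ /(congr1 (@liftf _)); rewrite !liftf_tofX => /val_inj //.
have := big_imset (fun f => G (liftf f)) inj.
move=> /= <-.
rewrite [X in _ <= X](bigID (mem (imset (@tofX Xs) (mem predT)))) /=.
by rewrite lerDl sumr_ge0.
Qed.

Lemma sum_prod_full (A : {fset O}) (h : O -> R) :
  \sum_(f : {ffun 'I_n -> A}) \prod_(i < n) h (liftf f i) = (\sum_(o <- A) h o) ^+ n.
Proof.
under eq_bigr => f _ do under eq_bigr => i _ do rewrite ffunE.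
rewrite -(bigA_distr_bigA (fun (i : 'I_n) (j : A) => h (val j))) /=.
rewrite prodr_const card_ord; congr (_ ^+ _).
by rewrite (@big_seq_fsetE _ _ _ _ _ xpredT).
Qed.

End Tup.

Local Close Scope fset_scope.

Unset Implicit Arguments.
End Part3.
Import Part3.

Module Part4.
Unset Implicit Arguments.
Local Close Scope classical_set_scope.

Section Reals.
Variable R : realType.

Lemma powX_le (n : nat) (x y : R) : 0 <= x -> x <= y -> x ^+ n <= y ^+ n.
Proof.
move=> x0 xy; apply: lerXn2r => //; rewrite nnegrE //; exact: le_trans xy.
Qed.

Lemma key_point (eps lam y z : R) : 0 < lam -> 0 < y -> 0 < z ->
  y <= expR eps * z + expR (- (lam * eps)) * (y * (y / z) `^ lam).
Proof.
move=> lam0 y0 z0.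
have h2 : 0 <= expR (- (lam * eps)) * (y * (y / z) `^ lam).
  by rewrite mulr_ge0 ?expR_ge0 // mulr_ge0 ?powR_ge0 // ltW.
have [yle|ylt] := leP y (expR eps * z).
  by apply: le_trans yle _; rewrite lerDl.
have h1 : expR eps <= y / z by rewrite ler_pdivlMr // ltW.
have h3 : expR (eps * lam) <= (y / z) `^ lam.
  rewrite expRM; apply: ge0_ler_powR => //; first exact: ltW.
    by rewrite nnegrE expR_ge0.
  by rewrite nnegrE divr_ge0 // ltW.
suff H : y <= expR (- (lam * eps)) * (y * (y / z) `^ lam).
  apply: le_trans H _; rewrite lerDr mulr_ge0 ?expR_ge0 // ltW //.
rewrite mulrCA.
have {1}-> : y = y * (expR (- (lam * eps)) * expR (eps * lam)).
  by rewrite -expRD [eps * lam]mulrC addNr expR0 mulr1.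
apply: ler_wpM2l; first exact: ltW.
apply: ler_wpM2l; first exact: expR_ge0.
exact: h3.
Qed.

Lemma diffpow_mono (n : nat) (beta x y : R) : 0 <= beta -> 0 <= x -> x <= y ->
  (x + beta) ^+ n - x ^+ n <= (y + beta) ^+ n - y ^+ n.
Proof.
move=> b0 x0 xy; have y0 : 0 <= y by exact: le_trans xy.
rewrite !subrXX addrAC subrr add0r addrAC subrr add0r.
apply: ler_wpM2l => //; apply: ler_sum => i _.
apply: ler_pM; rewrite ?exprn_ge0 ?addr_ge0 //.
  by apply: powX_le; rewrite ?addr_ge0 // lerD2r.
exact: powX_le.
Qed.

Lemma bad_bound (n : nat) (q b p beta : R) : 0 <= q -> q <= p -> 0 <= b -> b <= beta ->
  p + beta = 1 -> (q + b) ^+ n - q ^+ n <= 1 - p ^+ n.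
Proof.
move=> q0 qp b0 bb pb.
apply: (@le_trans _ _ ((q + beta) ^+ n - q ^+ n)).
  by rewrite lerD2r; apply: powX_le; rewrite ?addr_ge0 // lerD2l.
have -> : (1 : R) = (p + beta) ^+ n by rewrite pb expr1n.
apply: diffpow_mono => //; exact: le_trans bb.
Qed.

End Reals.

Section Reals2.
Variable R : realType.
Lemma final_alg (n : nat) (p ps s sA ss c : R) : 0 < ps -> ps <= p ->
  0 <= sA -> sA <= s -> s / p <= ss / ps -> 0 < c -> c * ss ^+ n < ps ^+ n ->
  (1 - p ^+ n) + c * sA ^+ n <= 1 - ps ^+ n + c * ss ^+ n.
Proof.
move=> ps0 psp sA0 sAs sr c0 cK.
have p0 : 0 < p by exact: lt_le_trans psp.
set r := ss / ps.
have r0 : 0 <= r.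
  apply: le_trans sr; by rewrite divr_ge0 ?(le_trans sA0 sAs) ?ltW.
have ssE : ss = r * ps by rewrite /r divfK // gt_eqF.
have sle : s <= r * p by rewrite -ler_pdivrMr.
have h1 : c * sA ^+ n <= (c * r ^+ n) * p ^+ n.
  rewrite -mulrA -exprMn; apply: ler_wpM2l; first exact: ltW.
  by apply: powX_le => //; apply: le_trans sAs sle.
rewrite ssE exprMn mulrA in cK *.
set K := c * r ^+ n in h1 cK *.
have a0 : 0 < ps ^+ n by rewrite exprn_gt0.
have ab : ps ^+ n <= p ^+ n by apply: powX_le => //; exact: ltW.
have K1 : K < 1.
  by move: cK; rewrite -{2}[ps ^+ n]mul1r ltr_pM2r.
have H : 0 <= (p ^+ n - ps ^+ n) * (1 - K).
  by rewrite mulr_ge0 // subr_ge0 // ltW.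
move: H; rewrite mulrBr mulr1 mulrBl => H.
lra.
Qed.
End Reals2.

Section ExpLne.
Variable R : realType.
Lemma expeR_nlne (n : nat) (s x : R) : (0 < n)%N -> (0 <= s)%R ->
  expeR ((n%:R)%:E * lne s%:E - x%:E) = (expR (- x) * s ^+ n)%:E.
Proof.
move=> n0 s0; have [->|sp] := eqVneq s 0%R.
  rewrite le0_lneNy // gt0_muleNy ?lte_fin ?ltr0n //= expr0n.
  by rewrite gtn_eqF // mulr0.
have s0' : (0 < s)%R by rewrite lt_neqAle eq_sym sp.
rewrite lne_EFin //= expRD expRM_natl lnK ?posrE // mulrC.
by [].
Qed.

Lemma expeR_nlne_y (n : nat) (x : R) : (0 < n)%N ->
  expeR ((n%:R)%:E * lne +oo%E - x%:E)%E = +oo%E.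
Proof. by move=> n0; rewrite /= gt0_muley ?lte_fin ?ltr0n. Qed.
End ExpLne.

Unset Implicit Arguments.
Local Open Scope classical_set_scope.
End Part4.
Import Part4.

Module Part5.
Set Implicit Arguments. Unset Strict Implicit.

Section Core.
Variables (R : realType) (O : choiceType) (n : nat).
Variables (P Q : O -> R).
Hypotheses (P0 : forall o, 0 <= P o) (Q0 : forall o, 0 <= Q o).

Definition h1 o := if o \in finite_loss P Q then P o else 0.
Definition hb o := if o \in [set o | ploss P Q o = +oo%E] then P o else 0.
Definition g1 lam o := if o \in finite_loss P Q then P o * (P o / Q o) `^ lam else 0.

Lemma h1_ge0 o : 0 <= h1 o. Proof. by rewrite /h1; case: ifP. Qed.
Lemma hb_ge0 o : 0 <= hb o. Proof. by rewrite /hb; case: ifP. Qed.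
Lemma g1_ge0 lam o : 0 <= g1 lam o.
Proof. by rewrite /g1; case: ifP => // _; rewrite mulr_ge0 ?powR_ge0. Qed.
Lemma h1_le o : h1 o <= P o. Proof. by rewrite /h1; case: ifP. Qed.

Lemma P_split o : P o = h1 o + hb o.
Proof.
rewrite /h1 /hb.
have [HP|HP] := eqVneq (P o) 0.
  by rewrite HP; case: ifP; case: ifP; rewrite ?addr0.
have [HQ|HQ] := eqVneq (Q o) 0.
  rewrite memNset; last by move/finite_lossE => [_]; rewrite HQ eqxx.
  by rewrite mem_set ?add0r //=; apply/inf_lossE.
rewrite mem_set; last by apply/finite_lossE.
rewrite memNset ?addr0 //= => /inf_lossE [_ HQ']; by rewrite HQ' eqxx in HQ.
Qed.

Lemma prod_powR (f : 'I_n -> R) r : (forall i, 0 <= f i) ->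
  \prod_(i < n) (f i `^ r) = (\prod_(i < n) f i) `^ r.
Proof.
move=> f0.
pose K (a b : R) := a = b `^ r /\ 0 <= b.
suff [] : K (\prod_(i < n) (f i `^ r)) (\prod_(i < n) f i) by [].
apply: (big_rec2 K); first by split => //; rewrite powR1.
move=> i a b _ [-> b0]; split; last by rewrite mulr_ge0.
by rewrite powRM.
Qed.

Definition Pn (x : {ffun 'I_n -> O}) := \prod_(i < n) P (x i).
Definition Qn (x : {ffun 'I_n -> O}) := \prod_(i < n) Q (x i).

Lemma point (lam eps : R) (x : {ffun 'I_n -> O}) : 0 < lam ->
  Pn x <= expR eps * Qn x + (Pn x - \prod_(i < n) h1 (x i))
          + expR (- (lam * eps)) * \prod_(i < n) g1 lam (x i).
Proof.
move=> lam0.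
have Qn0 : 0 <= expR eps * Qn x by rewrite mulr_ge0 ?expR_ge0 // prodr_ge0.
have Gn0 : 0 <= expR (- (lam * eps)) * \prod_(i < n) g1 lam (x i).
  by rewrite mulr_ge0 ?expR_ge0 // prodr_ge0 // => i _; exact: g1_ge0.
have [allF|notall] := pselect (forall i, finite_loss P Q (x i)).
  have e1 : \prod_(i < n) h1 (x i) = Pn x.
    by apply: eq_bigr => i _; rewrite /h1 mem_set.
  have e2 : \prod_(i < n) g1 lam (x i) = Pn x * (Pn x / Qn x) `^ lam.
    rewrite /Pn /Qn -prodf_div -prod_powR; last first.
      by move=> i; rewrite divr_ge0.
    rewrite -big_split /=; apply: eq_bigr => i _.
    by rewrite /g1 mem_set.
  rewrite e1 e2 subrr addr0.
  have := allF; move=> H.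
  apply: key_point => //.
    by apply: prodr_gt0 => i _; move: (H i) => /finite_lossE [HP _];
      rewrite lt_neqAle eq_sym HP P0.
  by apply: prodr_gt0 => i _; move: (H i) => /finite_lossE [_ HQ];
    rewrite lt_neqAle eq_sym HQ Q0.
have [i Hi] : exists i, ~ finite_loss P Q (x i).
  by apply/existsNP.
have e1 : \prod_(i < n) h1 (x i) = 0.
  by rewrite (bigD1 i) //= /h1 memNset // mul0r.
rewrite e1 subr0.
lra.
Qed.

Lemma core (lam eps : R) (Xs : {fset {ffun 'I_n -> O}}) : 0 < lam ->
  \sum_(x <- Xs) Pn x <= expR eps * \sum_(x <- Xs) Qn x
    + ((\sum_(o <- cods Xs) h1 o + \sum_(o <- cods Xs) hb o) ^+ n
         - (\sum_(o <- cods Xs) h1 o) ^+ n)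
    + expR (- (lam * eps)) * (\sum_(o0 <- cods Xs) g1 lam o0) ^+ n.
Proof.
move=> lam0.
apply: le_trans (ler_sum _ (fun (x : {ffun 'I_n -> O}) (_ : true) => point eps x lam0)) _.
rewrite big_split big_split -!mulr_sumr.
apply: lerD; first apply: lerD => //.
  apply: le_trans (sum_le_full _) _.
    move=> f; rewrite subr_ge0; apply: ler_prod => i _.
    by rewrite h1_ge0 h1_le.
  rewrite sumrB /Pn !sum_prod_full (eq_bigr (fun o => h1 o + hb o)) ?big_split //.
  by move=> o _; rewrite -P_split.
apply: ler_wpM2l; first exact: expR_ge0.
apply: le_trans (sum_le_full _) _.
  by move=> f; apply: prodr_ge0 => i _; exact: g1_ge0.
by rewrite sum_prod_full.
Qed.

Lemma le1 (Xs : {fset {ffun 'I_n -> O}}) :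
  \sum_(x <- Xs) Pn x <= (\sum_(o <- cods Xs) P o) ^+ n.
Proof.
apply: le_trans (sum_le_full _) _.
  by move=> f; apply: prodr_ge0 => i _.
by rewrite /Pn sum_prod_full.
Qed.

End Core.

Unset Implicit Arguments.
End Part5.
Import Part5.

Module Part6.
Set Implicit Arguments. Unset Strict Implicit.

Arguments sE {R O}.
Section PerLam.
Variables (R : realType) (O : choiceType) (n : nat).
Hypothesis n0 : (0 < n)%N.

Lemma per_lam (P Q Ps Qs : O -> R) (lam eps : R) (Xs : {fset {ffun 'I_n -> O}}) :
  is_pmf P -> is_pmf Ps -> (forall o, 0 <= Q o) -> 0 < lam ->
  (alpha lam P Q <= alpha lam Ps Qs)%E ->
  (beta_inf P Q <= beta_inf Ps Qs)%E ->
  ((\sum_(x <- Xs) Pn P x)%:E <= (expR eps * \sum_(x <- Xs) Pn Q x)%:E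
    + ((1 - (1 - fine (beta_inf Ps Qs)) ^+ n)%:E
       + expeR ((n%:R)%:E * Gamma lam Ps Qs - (lam * eps)%:E)))%E.
Proof.
move=> pmfP pmfPs Q0 lam0 Ha Hb.
have P0 := pmfP.1; have Ps0 := pmfPs.1.
have [p [b [pE bE p0 b0 pb]]] := @pmf_split R O P Q pmfP.
have [ps [bs [psE bsE ps0 bs0 psbs]]] := @pmf_split R O Ps Qs pmfPs.
have a0 : 0 <= \sum_(x <- Xs) Pn P x by apply: sumr_ge0 => x _; apply: prodr_ge0.
have b0' : 0 <= expR eps * \sum_(x <- Xs) Pn Q x.
  by rewrite mulr_ge0 ?expR_ge0 // sumr_ge0 // => x _; apply: prodr_ge0.
rewrite Gamma_sE bsE /=.
have sEs0 : (0 <= sE Ps Qs lam)%E.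
  by apply: esum_ge0 => o _; rewrite lee_fin mulr_ge0 ?powR_ge0.
case Es: (sE Ps Qs lam) sEs0 => [ss| |] // ss0; last first.
  by rewrite expeR_nlne_y // /adde /= leey.
rewrite lee_fin in ss0.
rewrite expeR_nlne // -!EFinD lee_fin.
have psE' : ps = 1 - bs by lra.
rewrite -psE'.
set c := expR (- (lam * eps)).
have c0 : 0 < c by exact: expR_gt0.
have [Hc|Hc] := leP (ps ^+ n) (c * ss ^+ n).
  have HA : \sum_(o <- cods Xs) P o <= 1.
    have := @esum_ge_fset R O P (cods Xs) P0; rewrite pmfP.2 lee_fin; exact.
  have HA0 : 0 <= \sum_(o <- cods Xs) P o by apply: sumr_ge0.
  have := @le1 R O n P P0 Xs; have := exprn_ile1 n HA0 HA.
  lra.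
have ps_pos : 0 < ps.
  rewrite lt_neqAle ps0 andbT; apply/negP => /eqP ps00.
  move: Hc; rewrite -ps00 expr0n gtn_eqF //= => Hc.
  have : 0 <= c * ss ^+ n by rewrite mulr_ge0 ?exprn_ge0 // ltW.
  lra.
have pps : ps <= p.
  move: Hb; rewrite bE bsE lee_fin; lra.
have p_pos : 0 < p by exact: lt_le_trans pps.
rewrite !alpha_sE pE psE Es in Ha.
have sEP0 : (0 <= sE P Q lam)%E.
  by apply: esum_ge0 => o _; rewrite lee_fin mulr_ge0 ?powR_ge0.
have Hr : (ss%:E / ps%:E)%E = (ss / ps)%:E.
  by rewrite inver gt_eqF // EFinM.
rewrite Hr in Ha.
case EsP: (sE P Q lam) sEP0 Ha => [s| |] // s0 Ha; last first.
  move: Ha; rewrite inver gt_eqF // gt0_mulye ?lte_fin ?invr_gt0 //= leye_eq.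
  by case: ifP.
rewrite inver gt_eqF // -EFinM in Ha.
rewrite lee_fin in s0.
have i1 : ((s / p)%:E \in `[0%E, +oo%E])%R.
  by rewrite in_itv /= leey andbT lee_fin divr_ge0 // ltW.
have i2 : ((ss / ps)%:E \in `[0%E, +oo%E])%R.
  by rewrite in_itv /= leey andbT lee_fin divr_ge0 // ltW.
rewrite (lee_lne i1 i2) lee_fin in Ha.
have Hcore := @core R O n P Q P0 Q0 lam eps Xs lam0.
set q := \sum_(o <- cods Xs) h1 P Q o in Hcore.
set bb := \sum_(o <- cods Xs) hb P Q o in Hcore.
set sA := \sum_(o <- cods Xs) g1 P Q lam o in Hcore.
have q0 : 0 <= q by apply: sumr_ge0 => o _; exact: (h1_ge0 Q P0).
have bb0 : 0 <= bb by apply: sumr_ge0 => o _; exact: (hb_ge0 Q P0).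
have sA0 : 0 <= sA by apply: sumr_ge0 => o _; exact: (g1_ge0 Q P0).
have qp : q <= p.
  by have := @prob_ge_fset R O P (finite_loss P Q) (cods Xs) P0; rewrite pE lee_fin.
have bbb : bb <= b.
  by have := @prob_ge_fset R O P [set o | ploss P Q o = +oo%E] (cods Xs) P0; rewrite -/(beta_inf P Q) bE lee_fin.
have sAs : sA <= s.
  have := @esum_ge_fset R O _ (cods Xs) (g1_ge0 Q P0 lam).
  by rewrite -sE_mkcond EsP lee_fin.
have HB := @bad_bound _ n _ _ _ _ q0 qp bb0 bbb pb.
have HF := @final_alg _ n _ _ _ _ _ _ ps_pos pps sA0 sAs Ha c0 Hc.
have eQ : Qn Q = Pn Q by [].
rewrite eQ -/c in Hcore.
lra.
Qed.

End PerLam.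

Unset Implicit Arguments.
End Part6.
Import Part6.

Theorem proposition1 (R : realType) (I : Type) (O : choiceType) (nb : I -> I -> Prop)
  (M : I -> O -> R) (D0 D1 : I) (n : nat) (eps : R) :
  (forall D, is_pmf (M D)) ->
  worst_case nb M D0 D1 ->
  (1 <= n)%N -> 0 < eps ->
  ADP nb (nfold M n) eps
    (maxe (delta_MA n eps (M D0) (M D1)) (delta_MA n eps (M D1) (M D0))).
Proof.
move=> pmf [nbD01 [k wc]] n1 eps0 S D D' nbDD'.
pose Dk := if k then D1 else D0.
pose Dk' := if k then D0 else D1.
have wc' : forall lam, 0 < lam ->
    (alpha lam (M D) (M D') <= alpha lam (M Dk) (M Dk'))%E /\
    (beta_inf (M D) (M D') <= beta_inf (M Dk) (M Dk'))%E.
  by move=> lam lam0; exact: (wc lam lam0 D D' nbDD').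
have Hmax : forall b : bool,
    (delta_MA n eps (M (if b then D1 else D0)) (M (if b then D0 else D1)) <=
    maxe (delta_MA n eps (M D0) (M D1)) (delta_MA n eps (M D1) (M D0)))%E.
  by case => /=; rewrite le_max lexx ?orbT.
apply: le_trans (leeD2l _ (Hmax k)).
rewrite /prob {1}/esum; apply: ge_ereal_sup => _ [X [finX XS]] <-.
rewrite fsbig_finite // sumEFin.
set Xs := fset_set X.
have HQ : ((\sum_(x <- Xs) nfold M n D' x)%:E <=
           \esum_(x in S) (nfold M n D' x)%:E)%E.
  apply: esum_ge; exists X; first by split.
  by rewrite fsbig_finite // sumEFin.
apply: (@le_trans _ _ ((expR eps * \sum_(x <- Xs) nfold M n D' x)%:E
          + delta_MA n eps (M Dk) (M Dk'))%E); last first.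
  apply: leeD2r; rewrite EFinM; by apply: lee_wpmul2l => //; rewrite lee_fin expR_ge0.
rewrite addeC -leeBlDr // -EFinB.
apply/ereal_infP => _ [lam lam0 <-].
rewrite EFinB leeBlDr // addeC.
have [Ha Hb] := wc' lam lam0.
exact: (per_lam n1 eps Xs (pmf D) (pmf Dk) (pmf D').1 lam0 Ha Hb).
Qed.
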